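(* Let $u\in\{0,1,2\}^*$, $w\in\{0,1\}^*$ and $s\in\mathcal{S}$ be such that $|u|=|w|$ and $\mathrm{val}_{\mathcal{F}}(u)=\mathrm{val}_{\mathcal{F}}(ws)$. Then for every $a\in\{0,1,2\}$ there exist a unique $b\in\{0,1\}$ and a unique $t\in\mathcal{S}$ such that $\mathrm{val}_{\mathcal{F}}(ua)=\mathrm{val}_{\mathcal{F}}(wbt)$.
   Context: Fibonacci numbers: $F_0=1$, $F_1=2$, $F_n=F_{n-1}+F_{n-2}$ for $n\ge2$. For a word $w=w_{k-1}\cdots w_0$ over $\{0,1,2\}$ (digits indexed from the right), $\mathrm{val}_{\mathcal{F}}(w)=\sum_{i=0}^{k-1}w_iF_i$. $\mathcal{S}=\{000,001,010,100,101\}$, the set of binary words of length 3 with no two consecutive $1$'s. *)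

(* Defs.v *)
From mathcomp Require Import all_boot.
Set Implicit Arguments. Unset Strict Implicit. Unset Printing Implicit Defensive.

Fixpoint Fib (n : nat) : nat :=
  match n with
  | 0 => 1
  | 1 => 2
  | (m.+1 as p).+1 => Fib p + Fib m
  end.

(* A word w = w_{k-1} ... w_0 is a seq nat listed in reading order
   (most significant digit first); digit at position i (from the right)
   has weight Fib i. *)
Fixpoint valF (w : seq nat) : nat :=
  match w with
  | [::] => 0
  | x :: s => x * Fib (size s) + valF s
  end.

Definition ternary_word (w : seq nat) : bool := all (fun d => d <= 2) w.
Definition binary_word (w : seq nat) : bool := all (fun d => d <= 1) w.

Definition Sset : seq (seq nat) :=
  [:: [:: 0; 0; 0]; [:: 0; 0; 1]; [:: 0; 1; 0]; [:: 1; 0; 0]; [:: 1; 0; 1]].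

(* Main.v *)
Require Import Defs.
From mathcomp Require Import all_boot.
From mathcomp Require Import zify.
From Stdlib Require Import ZArith Lia.

Lemma valF_nseq0 n : valF (nseq n 0) = 0.
Proof. by elim: n => //= n ->; rewrite mul0n. Qed.

Lemma valF_cat u v : valF (u ++ v) = valF (u ++ nseq (size v) 0) + valF v.
Proof.
elim: u => [|x u IH] /=.
  by rewrite valF_nseq0.
by rewrite IH !size_cat size_nseq addnA.
Qed.

Lemma FibS n : Fib n.+2 = Fib n.+1 + Fib n.
Proof. by []. Qed.

Lemma fibrec u k :
  valF (u ++ nseq k.+2 0) = valF (u ++ nseq k.+1 0) + valF (u ++ nseq k 0).
Proof.
elim: u => [|x u IH].
  by rewrite /= !valF_nseq0.
rewrite !cat_cons.
rewrite [valF (_ :: _ ++ nseq k.+2 0)]/valF -/valF.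
rewrite [valF (_ :: _ ++ nseq k.+1 0)]/valF -/valF.
rewrite [valF (_ :: _ ++ nseq k 0)]/valF -/valF.
rewrite IH !size_cat !size_nseq !addnS FibS mulnDr; lia.
Qed.

Open Scope Z_scope.

Definition Glist : list (Z * Z) :=
  [:: (-3, -5); (-3, -4); (-2, -4); (-2, -3); (-2, -2); (-1, -2); (-1, -1);
      (0, 0); (0, 1); (1, 1); (1, 2); (2, 3); (2, 4); (3, 5); (3, 6); (4, 6);
      (4, 7); (5, 8); (5, 9); (6, 9); (6, 10); (6, 11); (7, 11); (7, 12)].

Definition inG (a c : Z) : bool :=
  has (fun p => Z.eqb p.1 a && Z.eqb p.2 c) Glist.

Definition dead (a c : Z) : bool :=
  (Z.leb 8 a && Z.leb 13 c) || (Z.leb a (-4) && Z.leb c (-6)).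

Definition good a c := inG a c || dead a c.

Definition step (a c x y : Z) := (c + x - 5 * y, a + c + 2 * x - 8 * y).

Lemma Gclosed_check :
  all (fun p => all (fun x => all (fun y =>
     good (step p.1 p.2 x y).1 (step p.1 p.2 x y).2) [:: 0; 1]) [:: 0; 1; 2]) Glist.
Proof. by vm_compute. Qed.

Lemma Gbound_check :
  all (fun p => (Z.leb 0 p.1 && Z.leb p.1 4) ==> (Z.leb 0 p.2 && Z.leb p.2 7)) Glist.
Proof. by vm_compute. Qed.

Lemma inG_ex a c : inG a c -> exists2 p, List.In p Glist & p = (a, c).
Proof.
rewrite /inG; elim: Glist => [|[p1 p2] l IH] //=.
case/orP.
  move=> /andP[/Z.eqb_spec -> /Z.eqb_spec ->]; exists (a, c); by [left|].
by move/IH => [p Hp Ep]; exists p; by [right|].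
Qed.

Lemma all_In (T : Type) (P : pred T) (l : list T) p : all P l -> List.In p l -> P p.
Proof.
elim: l => [|q l IH] //= /andP[Hq Hl] [<-|H] //; exact: IH.
Qed.

Lemma good_step a c x y : good a c -> 0 <= x <= 2 -> 0 <= y <= 1 ->
  good (c + x - 5 * y) (a + c + 2 * x - 8 * y).
Proof.
move=> /orP[HG|HD] Hx Hy.
  have [p Hp Ep] := inG_ex _ _ HG.
  have Hc := @all_In _ _ _ p Gclosed_check Hp; rewrite Ep in Hc.
  have Hx' : List.In x [:: 0; 1; 2] by rewrite /=; lia.
  have Hy' : List.In y [:: 0; 1] by rewrite /=; lia.
  have := (@all_In _ _ _ y (@all_In _ _ _ x Hc Hx') Hy').
  by rewrite /step /=.
apply/orP; right; move: HD; rewrite /dead.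
case/orP => /andP [/Z.leb_spec0 H1 /Z.leb_spec0 H2]; apply/orP.
  by left; apply/andP; split; apply/Z.leb_spec0; lia.
by right; apply/andP; split; apply/Z.leb_spec0; lia.
Qed.

Definition stA u w := Z.of_nat (valF u) - Z.of_nat (valF (w ++ nseq 3 0%nat)).
Definition stC u w :=
  Z.of_nat (valF (u ++ nseq 1 0%nat)) - Z.of_nat (valF (w ++ nseq 4 0%nat)).

Close Scope Z_scope.

Lemma e1 u x : valF (rcons u x) = valF (u ++ nseq 1 0) + x.
Proof. by rewrite -cats1 valF_cat /= muln1 addn0. Qed.

Lemma e2 w y : valF (rcons w y ++ nseq 3 0) = valF (w ++ nseq 4 0) + y * 5.
Proof. rewrite cat_rcons valF_cat /=; lia. Qed.

Lemma e3 u x : valF (rcons u x ++ nseq 1 0) = valF (u ++ nseq 1 0) + valF u + x * 2.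
Proof.
rewrite cat_rcons valF_cat /=.
have := fibrec u 0; rewrite /= cats0 => ->; lia.
Qed.

Lemma e4 w y :
  valF (rcons w y ++ nseq 4 0) = valF (w ++ nseq 4 0) + valF (w ++ nseq 3 0) + y * 8.
Proof.
rewrite cat_rcons valF_cat /=.
have := fibrec w 3; rewrite /= => ->; lia.
Qed.

Lemma inv u w : ternary_word u -> binary_word w -> size u = size w ->
  good (stA u w) (stC u w).
Proof.
elim/last_ind: u w => [|u x IH] w.
  by case: w => // _ _ _; vm_compute.
case/lastP: w => [|w y]; first by rewrite size_rcons.
rewrite /ternary_word /binary_word !all_rcons => /andP[Hx Hu] /andP[Hy Hw].
rewrite !size_rcons => [[Hs]].
have G := IH w Hu Hw Hs.
have -> : stA (rcons u x) (rcons w y) =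
  (stC u w + Z.of_nat x - 5 * Z.of_nat y)%Z by rewrite /stA /stC e1 e2; lia.
have -> : stC (rcons u x) (rcons w y) =
  (stA u w + stC u w + 2 * Z.of_nat x - 8 * Z.of_nat y)%Z
  by rewrite /stA /stC e3 e4; lia.
apply: good_step => //; lia.
Qed.

Lemma Sset_prop t : t \in Sset -> size t = 3 /\ valF t <= 4.
Proof.
move=> Ht; repeat (case/predU1P: Ht => [->|Ht]) => //.
Qed.

Lemma ex9 D : D <= 9 -> exists b t, [/\ b <= 1, t \in Sset & valF (b :: t) = D].
Proof.
case: D => [|[|[|[|[|[|[|[|[|[|D]]]]]]]]]] // _.
- by exists 0, [:: 0; 0; 0].
- by exists 0, [:: 0; 0; 1].
- by exists 0, [:: 0; 1; 0].
- by exists 0, [:: 1; 0; 0].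
- by exists 0, [:: 1; 0; 1].
- by exists 1, [:: 0; 0; 0].
- by exists 1, [:: 0; 0; 1].
- by exists 1, [:: 0; 1; 0].
- by exists 1, [:: 1; 0; 0].
- by exists 1, [:: 1; 0; 1].
Qed.

Lemma injS b b' t t' : b <= 1 -> b' <= 1 -> t \in Sset -> t' \in Sset ->
  valF (b :: t) = valF (b' :: t') -> b = b' /\ t = t'.
Proof.
case: b => [|[|b]] // _; case: b' => [|[|b']] // _ Ht Ht';
repeat (case/predU1P: Ht => [->|Ht]) => //;
repeat (case/predU1P: Ht' => [->|Ht']) => //.
Qed.

Lemma valF_S w b t : t \in Sset ->
  valF (w ++ b :: t) = valF (w ++ nseq 4 0) + valF (b :: t).
Proof.
move=> /Sset_prop [Hs _]; by rewrite valF_cat /= Hs.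
Qed.

Theorem lemma5p3 (u w s : seq nat) :
  ternary_word u -> binary_word w -> s \in Sset ->
  size u = size w -> valF u = valF (w ++ s) ->
  forall a : nat, a <= 2 ->
  exists b : nat, exists t : seq nat,
    [/\ b <= 1, t \in Sset & valF (rcons u a) = valF (w ++ b :: t)] /\
    (forall (b' : nat) (t' : seq nat),
        b' <= 1 -> t' \in Sset -> valF (rcons u a) = valF (w ++ b' :: t') ->
        b' = b /\ t' = t).
Proof.
move=> Hu Hw Hs Hsz Hv a Ha.
have G := inv _ _ Hu Hw Hsz.
have [Hs3 Hs4] := Sset_prop _ Hs.
have Hv' : valF u = valF (w ++ nseq 3 0) + valF s by rewrite Hv valF_cat Hs3.
have HA : stA u w = Z.of_nat (valF s) by rewrite /stA Hv'; lia.
have HC : (0 <= stC u w <= 7)%Z.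
  move: G; rewrite /good HA => /orP[HG|HD].
    have [p Hp Ep] := inG_ex _ _ HG.
    have := @all_In _ _ _ p Gbound_check Hp; rewrite Ep /=.
    have -> : (0 <=? Z.of_nat (valF s))%Z && (Z.of_nat (valF s) <=? 4)%Z.
      by apply/andP; split; apply/Z.leb_spec0; lia.
    by move=> /= /andP[/Z.leb_spec0 ? /Z.leb_spec0 ?]; lia.
  move: HD; rewrite /dead => /orP[] /andP[/Z.leb_spec0 ? /Z.leb_spec0 ?]; lia.
move: HC; rewrite /stC => HC.
set D := valF (rcons u a) - valF (w ++ nseq 4 0).
have HD : D <= 9 by rewrite /D e1; lia.
have HDe : valF (rcons u a) = valF (w ++ nseq 4 0) + D by rewrite /D e1; lia.
have [b [t [Hb Ht Hbt]]] := ex9 _ HD.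
exists b, t; split.
  by split => //; rewrite valF_S // HDe Hbt.
move=> b' t' Hb' Ht'; rewrite valF_S // HDe => /addnI E.
have [-> ->] := injS _ _ _ _ Hb Hb' Ht Ht' (etrans Hbt E); by [].
Qed.
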